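(* Let $(\beta_n)_{n\ge1}$ be positive reals bounded away from $0$ and $+\infty$, and let $A_n$ satisfy (C1) and $\liminf_{n\to\infty}\frac1n\sum_{i,j=1}^nA_n(i,j)^2>0$. Then for every $B\in\mathbb R$ there exists $\delta>0$ such that $$\limsup_{n\to\infty}\frac1n\log\mathbb P^{\mathrm{cw}}_{n,\beta_n,B}\Big(\sum_{i=1}^n\big(m_i(\mathbf X)-\bar m(\mathbf X)\big)^2\le n\delta\Big)<0.$$
   Context: For each $n$, $A_n$ is a symmetric $n\times n$ matrix with non-negative entries and zero diagonal; (C1): there is a constant $\gamma<\infty$ with $\max_{i}\sum_{j}A_n(i,j)\le\gamma$ for all $n$. $\mathbb P^{\mathrm{cw}}_{n,\beta,B}$ is the Curie–Weiss model on $\{-1,1\}^n$: $\mathbb P^{\mathrm{cw}}_{n,\beta,B}(\mathbf X=\mathbf x)\propto\exp\big(\frac{\beta}{2n}(\sum_{i=1}^nx_i)^2+B\sum_{i=1}^nx_i\big)$. Here $m(\mathbf x)=A_n\mathbf x$, i.e. $m_i(\mathbf x)=\sum_jA_n(i,j)x_j$, and $\bar m(\mathbf x)=\frac1n\sum_im_i(\mathbf x)$ (the Curie–Weiss law does not depend on $A_n$; $A_n$ enters only through $m$). *)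

(* Defs.v *)
From Stdlib Require Import Reals List Arith.
Import ListNotations.
Open Scope R_scope.

Definition rsum (n : nat) (f : nat -> R) : R :=
  fold_right Rplus 0 (map f (seq 0 n)).

(* All configurations x in {-1,1}^n, as lists of length n; x_i = nth i x 0. *)
Fixpoint configs (n : nat) : list (list R) :=
  match n with
  | O => [ [] ]
  | S k => flat_map (fun l => [1 :: l; (-1) :: l]) (configs k)
  end.

Definition spin (x : list R) (i : nat) : R := nth i x 0.

Definition magn (n : nat) (x : list R) : R := rsum n (spin x).

Definition cw_weight (n : nat) (beta B : R) (x : list R) : R :=
  exp (beta / (2 * INR n) * (magn n x) ^ 2 + B * magn n x).

Definition cw_prob (n : nat) (beta B : R) (E : list R -> Prop)
  (Edec : forall x, {E x} + {~ E x}) : R :=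
  fold_right Rplus 0
    (map (fun x => if Edec x then cw_weight n beta B x else 0) (configs n))
  / fold_right Rplus 0 (map (cw_weight n beta B) (configs n)).

Definition m_i (n : nat) (A : nat -> nat -> R) (x : list R) (i : nat) : R :=
  rsum n (fun j => A i j * spin x j).

Definition m_bar (n : nat) (A : nat -> nat -> R) (x : list R) : R :=
  / INR n * rsum n (m_i n A x).

Definition m_var (n : nat) (A : nat -> nat -> R) (x : list R) : R :=
  rsum n (fun i => (m_i n A x i - m_bar n A x) ^ 2).

(* Main.v *)
Require Import Defs.
From Stdlib Require Import Reals List Arith Lra Lia Psatz Classical FunctionalExtensionality.
Import ListNotations.
Open Scope R_scope.

Definition lsum {T} (l : list T) (f : T -> R) : R := fold_right Rplus 0 (map f l).

Lemma lsum_nil {T} (f : T -> R) : lsum [] f = 0. Proof. reflexivity. Qed.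
Lemma lsum_cons {T} (a : T) l f : lsum (a :: l) f = f a + lsum l f. Proof. reflexivity. Qed.
Lemma lsum_app {T} (l1 l2 : list T) f : lsum (l1 ++ l2) f = lsum l1 f + lsum l2 f.
Proof. induction l1; unfold lsum in *; simpl. ring. rewrite IHl1. ring. Qed.

Lemma lsum_ext {T} (l : list T) f g : (forall x, In x l -> f x = g x) -> lsum l f = lsum l g.
Proof. induction l; intros H; simpl. reflexivity. unfold lsum in *; simpl.
  rewrite H by (left; auto). rewrite IHl; auto. intros; apply H; right; auto. Qed.
Lemma lsum_le {T} (l : list T) f g : (forall x, In x l -> f x <= g x) -> lsum l f <= lsum l g.
Proof. induction l; intros H; unfold lsum in *; simpl. lra.
  assert (f a <= g a) by (apply H; left; auto).
  assert (fold_right Rplus 0 (map f l) <= fold_right Rplus 0 (map g l)) by (apply IHl; intros; apply H; right; auto). lra. Qed.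
Lemma lsum_plus {T} (l : list T) f g : lsum l (fun x => f x + g x) = lsum l f + lsum l g.
Proof. induction l; unfold lsum in *; simpl. ring. rewrite IHl. ring. Qed.
Lemma lsum_scal {T} (l : list T) c f : lsum l (fun x => c * f x) = c * lsum l f.
Proof. induction l; unfold lsum in *; simpl. ring. rewrite IHl. ring. Qed.
Lemma lsum_nonneg {T} (l : list T) f : (forall x, In x l -> 0 <= f x) -> 0 <= lsum l f.
Proof. intros H. replace 0 with (lsum l (fun _ => 0)). apply lsum_le; auto.
  induction l; unfold lsum in *; simpl; auto. rewrite IHl. ring. intros; apply H; right; auto. Qed.
Lemma lsum_pos {T} (l : list T) f x0 : In x0 l -> (forall x, In x l -> 0 <= f x) -> 0 < f x0 -> 0 < lsum l f.
Proof. induction l; intros Hi H Hp; simpl in Hi. contradiction. rewrite lsum_cons.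
  destruct Hi as [<-|Hi]. assert (0 <= lsum l f) by (apply lsum_nonneg; intros; apply H; right; auto). lra.
  assert (0 <= f a) by (apply H; left; auto). assert (0 < lsum l f) by (apply IHl; auto; intros; apply H; right; auto). lra. Qed.

Lemma rsum_eq n f : rsum n f = lsum (seq 0 n) f. Proof. reflexivity. Qed.
Lemma rsum_0 f : rsum 0 f = 0. Proof. reflexivity. Qed.
Lemma rsum_S n f : rsum (S n) f = rsum n f + f n.
Proof. rewrite !rsum_eq, seq_S, lsum_app. simpl. rewrite lsum_cons, lsum_nil. ring. Qed.

Lemma rsum_ext n f g : (forall k, (k < n)%nat -> f k = g k) -> rsum n f = rsum n g.
Proof. intros H; induction n. reflexivity. rewrite !rsum_S, IHn, H; auto. Qed.
Lemma rsum_le n f g : (forall k, (k < n)%nat -> f k <= g k) -> rsum n f <= rsum n g.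
Proof. intros H; induction n. rewrite ?rsum_0; lra. rewrite !rsum_S.
  assert (f n <= g n) by auto. assert (rsum n f <= rsum n g) by auto. lra. Qed.
Lemma rsum_plus n f g : rsum n (fun k => f k + g k) = rsum n f + rsum n g.
Proof. induction n. rewrite ?rsum_0; ring. rewrite !rsum_S, IHn; ring. Qed.
Lemma rsum_minus n f g : rsum n (fun k => f k - g k) = rsum n f - rsum n g.
Proof. induction n. rewrite ?rsum_0; ring. rewrite !rsum_S, IHn; ring. Qed.
Lemma rsum_scal n c f : rsum n (fun k => c * f k) = c * rsum n f.
Proof. induction n. rewrite ?rsum_0; ring. rewrite !rsum_S, IHn; ring. Qed.
Lemma rsum_const0 n : rsum n (fun _ => 0) = 0.
Proof. induction n. reflexivity. rewrite rsum_S, IHn; ring. Qed.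
Lemma rsum_const n c : rsum n (fun _ => c) = INR n * c.
Proof. induction n. rewrite rsum_0; simpl; ring. rewrite rsum_S, IHn, S_INR; ring. Qed.
Lemma rsum_nonneg n f : (forall k, (k < n)%nat -> 0 <= f k) -> 0 <= rsum n f.
Proof. intros H. rewrite <- (rsum_const0 n). apply rsum_le; auto. Qed.
Lemma rsum_zero n f : (forall k, (k < n)%nat -> f k = 0) -> rsum n f = 0.
Proof. intros H. rewrite <- (rsum_const0 n). apply rsum_ext; auto. Qed.
Lemma rsum_term_le n f k : (forall k, (k < n)%nat -> 0 <= f k) -> (k < n)%nat -> f k <= rsum n f.
Proof. intros H Hk. induction n. lia. rewrite rsum_S.
  destruct (Nat.eq_dec k n). subst. assert (0 <= rsum n f) by (apply rsum_nonneg; intros; apply H; lia). lra.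
  assert (f k <= rsum n f) by (apply IHn; [intros; apply H; lia | lia]). assert (0 <= f n) by (apply H; lia). lra. Qed.
Lemma rsum_single n f k : (k < n)%nat -> (forall i, (i < n)%nat -> i <> k -> f i = 0) -> rsum n f = f k.
Proof. intros Hk H. induction n. lia. rewrite rsum_S.
  destruct (Nat.eq_dec k n). subst. rewrite (rsum_zero n). ring. intros; apply H; lia.
  rewrite IHn by (try lia; intros; apply H; lia). rewrite (H n) by lia. ring. Qed.
Lemma rsum_swap n m f : rsum n (fun i => rsum m (fun j => f i j)) = rsum m (fun j => rsum n (fun i => f i j)).
Proof. induction n. simpl. rewrite rsum_const0. reflexivity.
  rewrite rsum_S, IHn, <- rsum_plus. apply rsum_ext; intros; rewrite rsum_S; ring. Qed.
Lemma rsum_abs n f : Rabs (rsum n f) <= rsum n (fun k => Rabs (f k)).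
Proof. induction n. rewrite !rsum_0, Rabs_R0; lra. rewrite !rsum_S.
  eapply Rle_trans. apply Rabs_triang. lra. Qed.
Lemma rsum_add n m f : rsum (n + m) f = rsum n f + rsum m (fun k => f (n + k)%nat).
Proof. induction m. rewrite Nat.add_0_r, rsum_0. ring. rewrite Nat.add_succ_r, !rsum_S, IHm. ring. Qed.
Lemma rsum_pair n g : rsum (n * n) (fun t => g (t / n)%nat (t mod n)%nat) = rsum n (fun i => rsum n (fun j => g i j)).
Proof.
  assert (forall a, rsum (a * n) (fun t => g (t / n)%nat (t mod n)%nat) = rsum a (fun i => rsum n (fun j => g i j))).
  { induction a. reflexivity. replace (S a * n)%nat with (a * n + n)%nat by lia.
    rewrite rsum_add, rsum_S, IHa. f_equal. apply rsum_ext. intros k Hk.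
    replace (a * n + k)%nat with (k + a * n)%nat by lia.
    rewrite Nat.div_add by lia. rewrite Nat.Div0.mod_add. rewrite Nat.div_small, Nat.mod_small by lia. reflexivity. }
  apply H.
Qed.
Lemma lsum_rsum_swap {T} (l : list T) N f : lsum l (fun x => rsum N (f x)) = rsum N (fun u => lsum l (fun x => f x u)).
Proof. induction l. simpl. rewrite rsum_const0. reflexivity. rewrite lsum_cons, IHl.
  rewrite <- rsum_plus. apply rsum_ext; intros. rewrite lsum_cons. ring. Qed.
Fixpoint flip (p : nat) (x : list R) {struct x} : list R :=
  match x with
  | [] => []
  | a :: l => match p with O => (- a) :: l | S q => a :: flip q l end
  end.

Lemma spin_flip p x q : spin (flip p x) q = if Nat.eq_dec q p then - spin x q else spin x q.
Proof. unfold spin. revert p q. induction x; intros p q; simpl.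
  destruct (Nat.eq_dec q p); destruct q; simpl; ring.
  destruct p, q; simpl.
  destruct (Nat.eq_dec 0 0); try lia; auto.
  destruct (Nat.eq_dec (S q) 0); try lia; auto.
  destruct (Nat.eq_dec 0 (S p)); try lia; auto.
  rewrite IHx. destruct (Nat.eq_dec q p), (Nat.eq_dec (S q) (S p)); auto; lia. Qed.

Lemma configs_in n x : In x (configs n) -> length x = n /\ (forall a, In a x -> a = 1 \/ a = -1).
Proof. revert x; induction n; intros x H; simpl in H.
  destruct H as [<-|[]]. simpl; split; auto; intros a [].
  apply in_flat_map in H. destruct H as [l [Hl Hx]]. apply IHn in Hl. destruct Hl as [Hlen Hl].
  simpl in Hx. destruct Hx as [<-|[<-|[]]]; simpl; split; auto; intros a [<-|Ha]; auto. Qed.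


Lemma configs_spin n x i : In x (configs n) -> (i < n)%nat -> spin x i = 1 \/ spin x i = -1.
Proof. intros H Hi. apply configs_in in H. destruct H as [Hl H]. unfold spin.
  apply H. apply nth_In. lia. Qed.

Lemma configs_spin_abs n x i : In x (configs n) -> Rabs (spin x i) <= 1.
Proof. intros H. destruct (Nat.lt_ge_cases i n).
  destruct (configs_spin n x i H H0) as [->| ->]; apply Rabs_le; lra.
  apply configs_in in H. unfold spin. rewrite nth_overflow by lia. rewrite Rabs_R0; lra. Qed.

Lemma configs_nonempty n : exists x, In x (configs n).
Proof. induction n. exists []. simpl; auto. destruct IHn as [x Hx]. exists (1 :: x). simpl.
  apply in_flat_map. exists x. split; auto. simpl; auto. Qed.

Lemma lsum_flat2 (L : list (list R)) f :
  lsum (flat_map (fun l => [1 :: l; (-1) :: l]) L) f = lsum L (fun l => f (1 :: l) + f ((-1) :: l)).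
Proof. induction L. reflexivity. unfold lsum in *; simpl. rewrite IHL. ring. Qed.

Lemma lsum_configs_flip n p f : lsum (configs n) (fun x => f (flip p x)) = lsum (configs n) f.
Proof. revert p f. induction n; intros p f. simpl. unfold lsum; simpl. destruct p; reflexivity.
  simpl. rewrite !lsum_flat2. destruct p; simpl.
  apply lsum_ext. intros. rewrite Rplus_comm. f_equal; f_equal; f_equal; lra.
  apply (IHn p (fun l => f (1 :: l) + f ((-1) :: l))). Qed.

Lemma list_max {T} (l : list T) (F : T -> R) x0 : In x0 l -> exists x, In x l /\ forall y, In y l -> F y <= F x.
Proof. revert x0. induction l; intros x0 H. destruct H.
  destruct l as [|b l'].
  - exists a. split. left; auto. intros y [<-|[]]; lra.
  - assert (IH := IHl b (or_introl eq_refl)). destruct IH as [x [Hx Hm]].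
    destruct (Rle_dec (F a) (F x)).
    + exists x. split. right; auto. intros y [<-|Hy]; auto.
    + exists a. split. left; auto. intros y [<-|Hy]. lra. specialize (Hm y Hy). lra. Qed.

Lemma flip_in n p x : In x (configs n) -> In (flip p x) (configs n).
Proof. revert p x; induction n; intros p x H; simpl in *.
  destruct H as [<-|[]]. simpl; auto.
  apply in_flat_map in H. destruct H as [l [Hl Hx]]. apply in_flat_map.
  simpl in Hx. destruct Hx as [<-|[<-|[]]]; destruct p; simpl.
  - exists l; simpl; split; auto.
  - exists (flip p l); split; simpl; auto.
  - exists l. split; auto. left. f_equal. lra.
  - exists (flip p l); split; simpl; auto. Qed.
Definition wgt (n : nat) (A : nat -> nat -> R) (t u : nat) : R :=
  A (t / n)%nat (u mod n)%nat + A (t mod n)%nat (u mod n)%nat.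
Definition WW n A t u := wgt n A t u + wgt n A u t.

Definition Qf (N : nat) (w : nat -> nat -> R) (b : nat -> R) : R :=
  rsum N (fun k => rsum N (fun u => if Nat.eq_dec k u then 0 else b k * b u * w k u)).

Lemma rsum2_split3 N f g h : rsum N (fun k => rsum N (fun u => f k u + g k u + h k u)) =
  rsum N (fun k => rsum N (f k)) + rsum N (fun k => rsum N (g k)) + rsum N (fun k => rsum N (h k)).
Proof. rewrite <- !rsum_plus. apply rsum_ext; intros. rewrite !rsum_plus. reflexivity. Qed.

Lemma Qf_step N w b0 b1 t : (t < N)%nat -> b0 t = 0 -> b1 t = 1 -> (forall u, u <> t -> b1 u = b0 u) ->
  Qf N w b1 = Qf N w b0 + rsum N (fun u => if Nat.eq_dec u t then 0 else b0 u * (w t u + w u t)).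
Proof. intros Ht H0 H1 Hu. unfold Qf.
  transitivity (rsum N (fun k => rsum N (fun u =>
     (if Nat.eq_dec k u then 0 else b0 k * b0 u * w k u)
     + (if Nat.eq_dec k t then (if Nat.eq_dec u t then 0 else b0 u * w t u) else 0)
     + (if Nat.eq_dec u t then (if Nat.eq_dec k t then 0 else b0 k * w k t) else 0)))).
  { apply rsum_ext; intros k Hk; apply rsum_ext; intros u Hu'.
    destruct (Nat.eq_dec k u) as [e1|e1], (Nat.eq_dec k t) as [e2|e2], (Nat.eq_dec u t) as [e3|e3].
    all: try (exfalso; lia).
    all: try ring.
    - subst k. rewrite H1, H0, (Hu u e3). ring.
    - subst u. rewrite H1, H0, (Hu k e2). ring.
    - rewrite (Hu u e3), (Hu k e2). ring. }
  rewrite rsum2_split3. rewrite Rplus_assoc. f_equal.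
  replace (fun u => if Nat.eq_dec u t then 0 else b0 u * (w t u + w u t)) with
    (fun u => (if Nat.eq_dec u t then 0 else b0 u * w t u) + (if Nat.eq_dec u t then 0 else b0 u * w u t))
    by (apply functional_extensionality; intros u; destruct (Nat.eq_dec u t); ring).
  rewrite rsum_plus. f_equal.
  - rewrite (rsum_single N _ t Ht).
    + destruct (Nat.eq_dec t t); [|lia]. reflexivity.
    + intros i Hi Hne. apply rsum_zero; intros. destruct (Nat.eq_dec i t); [lia|reflexivity].
  - rewrite (rsum_swap N N). rewrite (rsum_single N _ t Ht).
    + destruct (Nat.eq_dec t t); [|lia]. reflexivity.
    + intros i Hi Hne. apply rsum_zero; intros. destruct (Nat.eq_dec i t); [lia|reflexivity].
Qed.

Lemma rsum_step N b0 b1 t : (t < N)%nat -> b0 t = 0 -> b1 t = 1 -> (forall u, u <> t -> b1 u = b0 u) ->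
  rsum N b1 = rsum N b0 + 1.
Proof. intros Ht H0 H1 Hu.
  assert (rsum N b1 = rsum N (fun u => b0 u + if Nat.eq_dec u t then 1 else 0)).
  { apply rsum_ext; intros u _. destruct (Nat.eq_dec u t). subst; rewrite H0, H1; ring. rewrite Hu by auto; ring. }
  rewrite H, rsum_plus, (rsum_single N (fun k => if Nat.eq_dec k t then 1 else 0) t Ht). destruct (Nat.eq_dec t t); [ring|lia].
  intros i _ Hi; destruct (Nat.eq_dec i t); [lia|auto]. Qed.


Lemma sumAA1 n A γ q : (forall i j, (i < n)%nat -> (j < n)%nat -> A i j = A j i) ->
  (forall i j, (i < n)%nat -> (j < n)%nat -> 0 <= A i j) ->
  (forall i, (i < n)%nat -> rsum n (fun j => A i j) <= γ) -> (q < n)%nat ->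
  rsum n (fun i => rsum n (fun j => A i j * A i q)) <= γ * γ.
Proof. intros Hs Hn Hr Hq.
  apply Rle_trans with (rsum n (fun i => γ * A q i)).
  - apply rsum_le; intros i Hi. rewrite (Hs q i) by auto.
    replace (rsum n (fun j => A i j * A i q)) with (A i q * rsum n (fun j => A i j)).
    rewrite Rmult_comm. apply Rmult_le_compat_r; auto.
    rewrite <- rsum_scal. apply rsum_ext; intros; ring.
  - rewrite rsum_scal. apply Rmult_le_compat_l; auto.
    apply Rle_trans with (rsum n (fun j => A 0%nat j)). apply rsum_nonneg; intros; apply Hn; lia. apply Hr; lia.
Qed.

Lemma sumAA2 n A γ p : (forall i j, (i < n)%nat -> (j < n)%nat -> A i j = A j i) ->
  (forall i j, (i < n)%nat -> (j < n)%nat -> 0 <= A i j) ->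
  (forall i, (i < n)%nat -> rsum n (fun j => A i j) <= γ) -> (p < n)%nat ->
  rsum n (fun i => rsum n (fun j => A i j * A p j)) <= γ * γ.
Proof. intros Hs Hn Hr Hp. rewrite rsum_swap.
  apply Rle_trans with (rsum n (fun j => γ * A p j)).
  - apply rsum_le; intros j Hj.
    replace (rsum n (fun i => A i j * A p j)) with (A p j * rsum n (fun i => A j i)).
    rewrite Rmult_comm. apply Rmult_le_compat_r; auto.
    rewrite <- rsum_scal. apply rsum_ext; intros i Hi; rewrite (Hs i j) by auto; ring.
  - rewrite rsum_scal. apply Rmult_le_compat_l; auto.
    apply Rle_trans with (rsum n (fun j => A 0%nat j)). apply rsum_nonneg; intros; apply Hn; lia. apply Hr; lia.
Qed.

Lemma divmod_lt n t : (t < n * n)%nat -> (t / n < n)%nat /\ (t mod n < n)%nat.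
Proof. intros H. assert (n <> 0%nat) by (intro; subst; simpl in H; lia). split.
  apply Nat.Div0.div_lt_upper_bound. lia. apply Nat.mod_upper_bound; auto. Qed.

Lemma sumWW n A γ τ u : 0 < τ ->
  (forall i j, (i < n)%nat -> (j < n)%nat -> A i j = A j i) ->
  (forall i j, (i < n)%nat -> (j < n)%nat -> 0 <= A i j) ->
  (forall i, (i < n)%nat -> rsum n (fun j => A i j) <= γ) -> (u < n * n)%nat ->
  rsum (n * n) (fun t => (if Rle_dec τ (A (t / n)%nat (t mod n)%nat) then 1 else 0) * WW n A t u) <= 4 * (γ * γ) / τ.
Proof. intros Ht Hs Hn Hr Hu. destruct (divmod_lt n u Hu) as [Hp Hq].
  set (p := (u / n)%nat) in *. set (q := (u mod n)%nat) in *.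
  apply Rle_trans with (rsum (n * n) (fun t => / τ * (A (t / n)%nat (t mod n)%nat * WW n A t u))).
  - apply rsum_le; intros t Ht'. destruct (divmod_lt n t Ht').
    assert (0 <= WW n A t u). { unfold WW, wgt. fold p q.
      assert (0 <= A (t/n)%nat q) by auto. assert (0 <= A (t mod n)%nat q) by auto.
      assert (0 <= A p (t mod n)%nat) by auto. assert (0 <= A q (t mod n)%nat) by auto. lra. }
    destruct (Rle_dec τ _).
    + rewrite <- Rmult_assoc. apply Rmult_le_compat_r; auto.
      apply (Rmult_le_reg_l τ); auto. rewrite <- Rmult_assoc, Rinv_r by lra. lra.
    + rewrite Rmult_0_l. apply Rmult_le_pos. left; apply Rinv_0_lt_compat; auto.
      apply Rmult_le_pos; auto.
  - rewrite rsum_scal.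
    replace (rsum (n * n) (fun t => A (t / n)%nat (t mod n)%nat * WW n A t u)) with
      (rsum (n * n) (fun t => (fun i j => A i j * (A i q + A j q + A p j + A q j)) (t / n)%nat (t mod n)%nat))
      by (apply rsum_ext; intros; unfold WW, wgt; fold p q; ring).
    rewrite (rsum_pair n (fun i j => A i j * (A i q + A j q + A p j + A q j))).
    assert (rsum n (fun i => rsum n (fun j => A i j * (A i q + A j q + A p j + A q j))) <= 4 * (γ * γ)).
    { replace (rsum n (fun i => rsum n (fun j => A i j * (A i q + A j q + A p j + A q j)))) with
        (rsum n (fun i => rsum n (fun j => A i j * A i q)) + rsum n (fun i => rsum n (fun j => A i j * A q j))
         + rsum n (fun i => rsum n (fun j => A i j * A p j)) + rsum n (fun i => rsum n (fun j => A i j * A q j))).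
      - assert (H1 := sumAA1 n A γ q Hs Hn Hr Hq). assert (H2 := sumAA2 n A γ q Hs Hn Hr Hq).
        assert (H3 := sumAA2 n A γ p Hs Hn Hr Hp). lra.
      - rewrite <- !rsum_plus. apply rsum_ext; intros i Hi. rewrite <- !rsum_plus. apply rsum_ext; intros j Hj.
        rewrite (Hs j q) by auto. ring. }
    unfold Rdiv. rewrite Rmult_comm. apply Rmult_le_compat_r. left; apply Rinv_0_lt_compat; auto.
    eapply Rle_trans; [|exact H]. right. apply rsum_ext; intros. reflexivity.
Qed.

Definition bsel (n : nat) (A : nat -> nat -> R) (τ : R) (y : list R) (t : nat) : R :=
  if Rle_dec τ (A (t / n)%nat (t mod n)%nat) then (if Req_dec_T (spin y t) 1 then 1 else 0) else 0.

Lemma selection n A γ τ : 0 < τ ->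
  (forall i j, (i < n)%nat -> (j < n)%nat -> A i j = A j i) ->
  (forall i j, (i < n)%nat -> (j < n)%nat -> 0 <= A i j) ->
  (forall i, (i < n)%nat -> rsum n (fun j => A i j) <= γ) ->
  exists b : nat -> R,
   (forall t, b t = 0 \/ b t = 1) /\
   (forall t, (t < n * n)%nat -> b t = 1 -> τ <= A (t / n)%nat (t mod n)%nat) /\
   (forall t, (t < n * n)%nat -> b t = 1 ->
      rsum (n * n) (fun u => if Nat.eq_dec u t then 0 else b u * WW n A t u) <= τ / 4) /\
   rsum (n * n) (fun t => if Rle_dec τ (A (t / n)%nat (t mod n)%nat) then 1 else 0)
     <= (1 + 16 * (γ * γ) / (τ * τ)) * rsum (n * n) b.
Proof.
  intros Hτ Hs Hn Hr. set (N := (n * n)%nat).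
  set (F := fun y => rsum N (bsel n A τ y) - 4 / τ * Qf N (wgt n A) (bsel n A τ y)).
  destruct (configs_nonempty N) as [x0 Hx0].
  destruct (list_max (configs N) F x0 Hx0) as [ys [Hys Hmax]].
  set (b := bsel n A τ ys).
  assert (Hb01 : forall t, b t = 0 \/ b t = 1).
  { intros t; unfold b, bsel. destruct (Rle_dec _ _); [destruct (Req_dec_T _ _)|]; auto. }
  assert (Hbc : forall t, b t = 1 -> τ <= A (t / n)%nat (t mod n)%nat).
  { intros t; unfold b, bsel. destruct (Rle_dec _ _); auto. intros; lra. }
  assert (Hbflip : forall t u, u <> t -> bsel n A τ (flip t ys) u = b u).
  { intros t u Hut. unfold b, bsel. rewrite spin_flip. destruct (Nat.eq_dec u t); [lia|auto]. }
  assert (HWnn : forall t u, (t < N)%nat -> (u < N)%nat -> 0 <= WW n A t u).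
  { intros t u Ht Hu. destruct (divmod_lt n t Ht), (divmod_lt n u Hu). unfold WW, wgt.
    assert (0 <= A (t/n)%nat (u mod n)%nat) by auto. assert (0 <= A (t mod n)%nat (u mod n)%nat) by auto.
    assert (0 <= A (u/n)%nat (t mod n)%nat) by auto. assert (0 <= A (u mod n)%nat (t mod n)%nat) by auto. lra. }
  assert (Hsel1 : forall t, (t < N)%nat -> b t = 1 ->
      rsum N (fun u => if Nat.eq_dec u t then 0 else b u * WW n A t u) <= τ / 4).
  { intros t Ht Hbt. assert (Hin := flip_in N t ys Hys). specialize (Hmax _ Hin).
    set (b0 := bsel n A τ (flip t ys)) in *.
    assert (Hb0t : b0 t = 0).
    { unfold b0, bsel. rewrite spin_flip. destruct (Nat.eq_dec t t); [|lia].
      unfold b, bsel in Hbt. destruct (Rle_dec _ _); auto. destruct (Req_dec_T (spin ys t) 1) as [Es|Es]; [|lra].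
      rewrite Es. destruct (Req_dec_T (-(1)) 1); auto. lra. }
    assert (HQ := Qf_step N (wgt n A) b0 b t Ht Hb0t Hbt (fun u H => eq_sym (Hbflip t u H))).
    assert (HS := rsum_step N b0 b t Ht Hb0t Hbt (fun u H => eq_sym (Hbflip t u H))).
    unfold F in Hmax. fold b0 in Hmax. fold b in Hmax. rewrite HQ, HS in Hmax.
    replace (rsum N (fun u => if Nat.eq_dec u t then 0 else b u * WW n A t u)) with
      (rsum N (fun u => if Nat.eq_dec u t then 0 else b0 u * (wgt n A t u + wgt n A u t))).
    2:{ apply rsum_ext; intros u _. destruct (Nat.eq_dec u t); auto. unfold b0. rewrite Hbflip; auto. }
    set (S := rsum N (fun u => if Nat.eq_dec u t then 0 else b0 u * (wgt n A t u + wgt n A u t))) in *.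
    assert (4 / τ * S <= 1) by lra.
    unfold Rdiv in *. apply (Rmult_le_reg_l (4 * / τ)). apply Rmult_lt_0_compat; [lra|apply Rinv_0_lt_compat; lra].
    replace (4 * / τ * (τ * / 4)) with 1 by (field; lra). lra. }
  assert (Hsel0 : forall t, (t < N)%nat -> τ <= A (t / n)%nat (t mod n)%nat -> b t = 0 ->
      τ / 4 <= rsum N (fun u => if Nat.eq_dec u t then 0 else b u * WW n A t u)).
  { intros t Ht Hc Hbt. assert (Hin := flip_in N t ys Hys). specialize (Hmax _ Hin).
    set (b1 := bsel n A τ (flip t ys)) in *.
    assert (Hb1t : b1 t = 1).
    { unfold b1, bsel. rewrite spin_flip. destruct (Nat.eq_dec t t); [|lia].
      unfold b, bsel in Hbt. destruct (Rle_dec _ _); [|lra]. destruct (Req_dec_T (spin ys t) 1); [lra|].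
      destruct (configs_spin N ys t Hys Ht) as [E|E]; [lra|]. rewrite E.
      destruct (Req_dec_T (- -1) 1); auto. lra. }
    assert (HQ := Qf_step N (wgt n A) b b1 t Ht Hbt Hb1t (Hbflip t)).
    assert (HS := rsum_step N b b1 t Ht Hbt Hb1t (Hbflip t)).
    unfold F in Hmax. fold b1 in Hmax. fold b in Hmax. rewrite HQ, HS in Hmax.
    unfold WW. set (S := rsum N (fun u => if Nat.eq_dec u t then 0 else b u * (wgt n A t u + wgt n A u t))) in *.
    assert (1 <= 4 / τ * S) by lra.
    unfold Rdiv in *. apply (Rmult_le_reg_l (4 * / τ)). apply Rmult_lt_0_compat; [lra|apply Rinv_0_lt_compat; lra].
    replace (4 * / τ * (τ * / 4)) with 1 by (field; lra). lra. }
  exists b. split; [|split; [|split]]; auto.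
  set (c := fun t => if Rle_dec τ (A (t / n)%nat (t mod n)%nat) then 1 else 0).
  apply Rle_trans with (rsum N b + rsum N (fun t => 4 / τ * (c t * rsum N (fun u => b u * WW n A t u)))).
  - replace (rsum N c) with (rsum N b + rsum N (fun t => c t - b t)) by (rewrite rsum_minus; ring).
    apply Rplus_le_compat_l. apply rsum_le. intros t Ht.
    assert (0 <= rsum N (fun u => b u * WW n A t u)).
    { apply rsum_nonneg; intros u Hu. destruct (Hb01 u) as [-> | ->]. lra. rewrite Rmult_1_l; auto. }
    assert (0 < 4 / τ) by (unfold Rdiv; apply Rmult_lt_0_compat; [lra|apply Rinv_0_lt_compat; lra]).
    unfold c. destruct (Rle_dec _ _) as [Hc|Hc].
    + destruct (Hb01 t) as [Hbt|Hbt].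
      * rewrite Hbt. rewrite Rmult_1_l. specialize (Hsel0 t Ht Hc Hbt).
        assert (rsum N (fun u => if Nat.eq_dec u t then 0 else b u * WW n A t u) <= rsum N (fun u => b u * WW n A t u)).
        { apply rsum_le; intros u Hu. destruct (Nat.eq_dec u t). destruct (Hb01 u) as [-> | ->]. lra.
          rewrite Rmult_1_l; auto. lra. }
        apply Rle_trans with (4 / τ * (τ / 4)). right; field; lra.
        apply Rmult_le_compat_l; lra.
      * rewrite Hbt. rewrite Rmult_1_l. apply Rle_trans with 0. lra. apply Rmult_le_pos; lra.
    + destruct (Hb01 t) as [Hbt|Hbt]. rewrite Hbt. lra. specialize (Hbc t Hbt). contradiction.
  - rewrite rsum_scal. rewrite Rmult_plus_distr_r, Rmult_1_l. apply Rplus_le_compat_l.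
    replace (rsum N (fun t => c t * rsum N (fun u => b u * WW n A t u))) with
      (rsum N (fun u => b u * rsum N (fun t => c t * WW n A t u))).
    2:{ transitivity (rsum N (fun u => rsum N (fun t => b u * (c t * WW n A t u)))).
        apply rsum_ext; intros; rewrite rsum_scal; reflexivity.
        rewrite (rsum_swap N N (fun u t => b u * (c t * WW n A t u))).
        apply rsum_ext. intros t _. rewrite <- rsum_scal. apply rsum_ext; intros; ring. }
    apply Rle_trans with (4 / τ * rsum N (fun u => b u * (4 * (γ * γ) / τ))).
    + apply Rmult_le_compat_l. unfold Rdiv; left; apply Rmult_lt_0_compat; [lra|apply Rinv_0_lt_compat; lra].
      apply rsum_le; intros u Hu. destruct (Hb01 u) as [-> | ->]. lra. rewrite !Rmult_1_l.
      apply (sumWW n A γ τ u Hτ Hs Hn Hr Hu).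
    + right. replace (rsum N (fun u => b u * (4 * (γ * γ) / τ))) with ((4 * (γ * γ) / τ) * rsum N b).
      field; lra. rewrite <- rsum_scal. apply rsum_ext; intros; ring.
Qed.

Definition SelOK (n : nat) (A : nat -> nat -> R) (b : nat -> R) (τ : R) : Prop :=
  0 < τ /\
  (forall i j, (i < n)%nat -> (j < n)%nat -> A i j = A j i) /\
  (forall i j, (i < n)%nat -> (j < n)%nat -> 0 <= A i j) /\
  (forall i, (i < n)%nat -> A i i = 0) /\
  (forall t, b t = 0 \/ b t = 1) /\
  (forall t, (t < n * n)%nat -> b t = 1 -> τ <= A (t / n)%nat (t mod n)%nat) /\
  (forall t, (t < n * n)%nat -> b t = 1 ->
      rsum (n * n) (fun u => if Nat.eq_dec u t then 0 else b u * WW n A t u) <= τ / 4).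

Lemma WW_nn n A t u : (forall i j, (i < n)%nat -> (j < n)%nat -> 0 <= A i j) ->
  (t < n * n)%nat -> (u < n * n)%nat -> 0 <= wgt n A t u /\ 0 <= wgt n A u t.
Proof. intros Hn Ht Hu. destruct (divmod_lt n t Ht), (divmod_lt n u Hu). unfold wgt.
    assert (0 <= A (t/n)%nat (u mod n)%nat) by auto. assert (0 <= A (t mod n)%nat (u mod n)%nat) by auto.
    assert (0 <= A (u/n)%nat (t mod n)%nat) by auto. assert (0 <= A (u mod n)%nat (t mod n)%nat) by auto. lra. Qed.

Lemma sel_pair_le n A b τ t u : SelOK n A b τ -> (t < n * n)%nat -> (u < n * n)%nat -> b t = 1 -> b u = 1 -> u <> t ->
  wgt n A t u <= τ / 4 /\ wgt n A u t <= τ / 4.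
Proof. intros [Hτ [Hs [Hn [Hd [H01 [Hc Hl]]]]]] Ht Hu Hbt Hbu Hne.
  specialize (Hl t Ht Hbt).
  assert (Hterm : b u * WW n A t u <= τ / 4).
  { eapply Rle_trans; [|exact Hl].
    assert (E := rsum_term_le (n * n) (fun u0 => if Nat.eq_dec u0 t then 0 else b u0 * WW n A t u0) u).
    cbv beta in E. destruct (Nat.eq_dec u t); [lia|]. apply E; auto.
    intros k Hk. destruct (Nat.eq_dec k t). lra. destruct (WW_nn n A t k Hn Ht Hk).
    destruct (H01 k) as [-> | ->]; unfold WW; lra. }
  rewrite Hbu, Rmult_1_l in Hterm. unfold WW in Hterm. destruct (WW_nn n A t u Hn Ht Hu). lra. Qed.

Lemma sel_disjoint n A b τ t u : SelOK n A b τ -> (t < n * n)%nat -> (u < n * n)%nat -> b t = 1 -> b u = 1 -> u <> t ->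
  (t / n <> u / n)%nat /\ (t / n <> u mod n)%nat /\ (t mod n <> u / n)%nat /\ (t mod n <> u mod n)%nat.
Proof. intros H Ht Hu Hbt Hbu Hne. destruct (sel_pair_le n A b τ t u H Ht Hu Hbt Hbu Hne) as [W1 W2].
  destruct H as [Hτ [Hs [Hn [Hd [H01 [Hc Hl]]]]]].
  destruct (divmod_lt n t Ht) as [T1 T2], (divmod_lt n u Hu) as [U1 U2].
  assert (Ct := Hc t Ht Hbt). assert (Cu := Hc u Hu Hbu). unfold wgt in W1, W2.
  assert (0 <= A (t/n)%nat (u mod n)%nat) by auto. assert (0 <= A (t mod n)%nat (u mod n)%nat) by auto.
  assert (0 <= A (u/n)%nat (t mod n)%nat) by auto. assert (0 <= A (u mod n)%nat (t mod n)%nat) by auto.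
  split; [|split; [|split]]; intro E.
  - assert (A (t / n)%nat (u mod n)%nat = A (u / n)%nat (u mod n)%nat) by (rewrite E; auto). lra.
  - assert (A (t mod n)%nat (u mod n)%nat = A (t / n)%nat (t mod n)%nat) by (rewrite <- E; apply Hs; auto). lra.
  - assert (A (u mod n)%nat (t mod n)%nat = A (u / n)%nat (u mod n)%nat) by (rewrite E; apply Hs; auto). lra.
  - assert (A (t / n)%nat (u mod n)%nat = A (t / n)%nat (t mod n)%nat) by (rewrite E; auto). lra.
Qed.

Lemma sel_diag n A b τ t : SelOK n A b τ -> (t < n * n)%nat -> b t = 1 -> (t / n <> t mod n)%nat.
Proof. intros [Hτ [Hs [Hn [Hd [H01 [Hc Hl]]]]]] Ht Hbt E. specialize (Hc t Ht Hbt).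
  destruct (divmod_lt n t Ht). rewrite E, Hd in Hc by auto. lra. Qed.

Definition delta (a b : nat) : R := if Nat.eq_dec a b then 1 else 0.

Lemma rsum_delta n f k : (k < n)%nat -> rsum n (fun v => delta v k * f v) = f k.
Proof. intros Hk. rewrite (rsum_single n _ k Hk). unfold delta. destruct (Nat.eq_dec k k); [ring|lia].
  intros i _ Hi. unfold delta. destruct (Nat.eq_dec i k); [lia|ring]. Qed.

Lemma cover_le1 n A b τ v : SelOK n A b τ ->
  rsum (n * n) (fun t => b t * (delta v (t / n)%nat + delta v (t mod n)%nat)) <= 1.
Proof. intros H. set (g := fun t => b t * (delta v (t / n)%nat + delta v (t mod n)%nat)).
  destruct H as [Hτ [Hs [Hn [Hd [H01 [Hc Hl]]]]]] eqn:HH. clear HH.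
  destruct (classic (exists t0, (t0 < n * n)%nat /\ g t0 <> 0)) as [[t0 [Ht0 Hg0]]|Hno].
  - assert (Hb0 : b t0 = 1). { destruct (H01 t0) as [E|E]; auto. unfold g in Hg0. rewrite E in Hg0. lra. }
    rewrite (rsum_single _ g t0 Ht0).
    + unfold g, delta. rewrite Hb0. assert (Hdd := sel_diag n A b τ t0 H Ht0 Hb0).
      destruct (Nat.eq_dec v (t0 / n)), (Nat.eq_dec v (t0 mod n)); try lia; lra.
    + intros i Hi Hne. unfold g. destruct (H01 i) as [E|E]. rewrite E; ring.
      destruct (sel_disjoint n A b τ i t0 H Hi Ht0 E Hb0 (not_eq_sym Hne)) as [D1 [D2 [D3 D4]]].
      unfold g, delta in Hg0. unfold delta.
      destruct (Nat.eq_dec v (t0 / n)), (Nat.eq_dec v (t0 mod n)), (Nat.eq_dec v (i / n)), (Nat.eq_dec v (i mod n));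
        subst; try lia; try ring; lra.
  - rewrite rsum_zero. lra. intros k Hk. destruct (Req_dec_T (g k) 0); auto. exfalso; apply Hno; eauto.
Qed.

Lemma pair_cover n A b τ f : SelOK n A b τ -> (forall v, (v < n)%nat -> 0 <= f v) ->
  rsum (n * n) (fun t => b t * (f (t / n)%nat + f (t mod n)%nat)) <= rsum n f.
Proof. intros H Hf.
  transitivity (rsum (n * n) (fun t => rsum n (fun v => b t * (delta v (t / n)%nat + delta v (t mod n)%nat) * f v))).
  { right. apply rsum_ext. intros t Ht. destruct (divmod_lt n t Ht).
    transitivity (b t * (rsum n (fun v => delta v (t / n)%nat * f v) + rsum n (fun v => delta v (t mod n)%nat * f v))).
    rewrite !rsum_delta; auto. rewrite <- rsum_plus, <- rsum_scal. apply rsum_ext; intros; ring. }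
  rewrite rsum_swap. apply rsum_le. intros v Hv.
  transitivity (f v * rsum (n * n) (fun t => b t * (delta v (t / n)%nat + delta v (t mod n)%nat))).
  right. rewrite <- rsum_scal. apply rsum_ext; intros; ring.
  assert (C := cover_le1 n A b τ v H). assert (0 <= f v) by auto.
  apply Rle_trans with (f v * 1). apply Rmult_le_compat_l; auto. lra. Qed.

Definition Dt n A t x : R := rsum n (fun q => (A (t / n)%nat q - A (t mod n)%nat q) * spin x q).
Definition rt n A b t x : R := rsum (n * n) (fun u => if Nat.eq_dec u t then 0 else
   b u * ((A (t / n)%nat (u mod n)%nat - A (t mod n)%nat (u mod n)%nat) * spin x (u mod n)%nat)).
Definition Pt n A b t x : R := Dt n A t x - rt n A b t x.
Definition gi n A b τ t x : R := if Rle_dec τ (Rabs (Pt n A b t x)) then 1 else 0.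
Definition Gc n A b τ x : R := rsum (n * n) (fun t => b t * gi n A b τ t x).

Lemma lin_flip n c x p : (p < n)%nat ->
  rsum n (fun q => c q * spin (flip p x) q) = rsum n (fun q => c q * spin x q) - 2 * c p * spin x p.
Proof. intros Hp.
  transitivity (rsum n (fun q => c q * spin x q + delta q p * (- 2 * c q * spin x q))).
  apply rsum_ext; intros q _. rewrite spin_flip. unfold delta. destruct (Nat.eq_dec q p); ring.
  rewrite rsum_plus, rsum_delta; auto. ring. Qed.

Lemma rt_abs n A b τ t x : SelOK n A b τ -> (t < n * n)%nat -> b t = 1 -> In x (configs n) ->
  Rabs (rt n A b t x) <= τ / 4.
Proof. intros H Ht Hbt Hx. assert (H' := H). destruct H as [Hτ [Hs [Hn [Hd [H01 [Hc Hl]]]]]].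
  specialize (Hl t Ht Hbt). eapply Rle_trans; [apply rsum_abs|]. eapply Rle_trans; [|exact Hl].
  apply rsum_le; intros u Hu. destruct (Nat.eq_dec u t). rewrite Rabs_R0; lra.
  destruct (H01 u) as [-> | ->]. rewrite !Rmult_0_l, Rabs_R0; lra.
  destruct (divmod_lt n t Ht), (divmod_lt n u Hu). unfold WW, wgt.
  rewrite Rmult_1_l, Rabs_mult. assert (Hsp := configs_spin_abs n x (u mod n)%nat Hx).
  assert (0 <= A (t/n)%nat (u mod n)%nat) by auto. assert (0 <= A (t mod n)%nat (u mod n)%nat) by auto.
  assert (0 <= A (u/n)%nat (t mod n)%nat) by auto. assert (0 <= A (u mod n)%nat (t mod n)%nat) by auto.
  assert (Rabs (A (t / n)%nat (u mod n)%nat - A (t mod n)%nat (u mod n)%nat) <= A (t/n)%nat (u mod n)%nat + A (t mod n)%nat (u mod n)%nat).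
  { apply Rabs_le; lra. }
  assert (0 <= Rabs (spin x (u mod n)%nat)) by apply Rabs_pos.
  assert (Rabs (A (t / n)%nat (u mod n)%nat - A (t mod n)%nat (u mod n)%nat) * Rabs (spin x (u mod n)%nat)
     <= (A (t/n)%nat (u mod n)%nat + A (t mod n)%nat (u mod n)%nat) * 1).
  { apply Rmult_le_compat; auto. apply Rabs_pos. } lra. Qed.

Lemma Dt_m n A t x : Dt n A t x = m_i n A x (t / n)%nat - m_i n A x (t mod n)%nat.
Proof. unfold Dt, m_i. rewrite <- rsum_minus. apply rsum_ext; intros; ring. Qed.

Lemma Vbound n A b τ x : SelOK n A b τ -> In x (configs n) ->
  9 * (τ * τ) / 32 * Gc n A b τ x <= m_var n A x.
Proof. intros H Hx. unfold m_var.
  eapply Rle_trans; [|apply (pair_cover n A b τ (fun v => (m_i n A x v - m_bar n A x) ^ 2) H)].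
  2:{ intros; apply pow2_ge_0. }
  unfold Gc. rewrite <- rsum_scal. apply rsum_le. intros t Ht.
  assert (H' := H). destruct H' as [Hτ [Hs [Hn [Hd [H01 [Hc Hl]]]]]].
  destruct (H01 t) as [E|E]; rewrite E. rewrite !Rmult_0_l, Rmult_0_r. lra.
  rewrite !Rmult_1_l. unfold gi. destruct (Rle_dec _ _) as [G|G].
  - assert (Hr := rt_abs n A b τ t x H Ht E Hx). unfold Pt in G.
    assert (HD : 3 * τ / 4 <= Rabs (Dt n A t x)).
    { assert (Rabs (Dt n A t x - rt n A b t x) <= Rabs (Dt n A t x) + Rabs (rt n A b t x)).
      { unfold Rminus. eapply Rle_trans. apply Rabs_triang. rewrite Rabs_Ropp. lra. } lra. }
    rewrite Dt_m in HD. set (a := m_i n A x (t / n)%nat) in *. set (c := m_i n A x (t mod n)%nat) in *.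
    set (mb := m_bar n A x).
    assert (9 * (τ * τ) / 16 <= (a - c) ^ 2).
    { destruct (Rle_dec 0 (a - c)); [rewrite Rabs_right in HD by lra | rewrite Rabs_left in HD by lra]; nra. }
    assert (0 <= (a + c - 2 * mb) ^ 2) by apply pow2_ge_0.
    assert ((a - mb) ^ 2 + (c - mb) ^ 2 = ((a - c) ^ 2 + (a + c - 2 * mb) ^ 2) / 2) by field. lra.
  - rewrite Rmult_0_r. assert (0 <= (m_i n A x (t / n)%nat - m_bar n A x) ^ 2) by apply pow2_ge_0.
    assert (0 <= (m_i n A x (t mod n)%nat - m_bar n A x) ^ 2) by apply pow2_ge_0. lra.
Qed.

Lemma rsum_step_lt N b0 b1 t : (t < N)%nat -> b0 t = 0 -> b1 t = 1 -> (forall u, (u < N)%nat -> u <> t -> b1 u = b0 u) ->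
  rsum N b1 = rsum N b0 + 1.
Proof. intros Ht H0 H1 Hu.
  assert (rsum N b1 = rsum N (fun u => b0 u + delta u t)).
  { apply rsum_ext; intros u Hu'. unfold delta. destruct (Nat.eq_dec u t). subst; rewrite H0, H1; ring. rewrite Hu by auto; ring. }
  rewrite H, rsum_plus. f_equal. rewrite <- (rsum_delta N (fun _ => 1) t Ht). apply rsum_ext; intros; ring. Qed.

Lemma rt_flip_self n A b τ k x : SelOK n A b τ -> (k < n * n)%nat -> b k = 1 ->
  rt n A b k (flip (k mod n)%nat x) = rt n A b k x.
Proof. intros H Hk Hbk. unfold rt. apply rsum_ext; intros u Hu. destruct (Nat.eq_dec u k); auto.
  destruct H as [Hτ [Hs [Hn [Hd [H01 [Hc Hl]]]]]] eqn:HH. clear HH.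
  destruct (H01 u) as [E|E]. rewrite E; ring.
  destruct (sel_disjoint n A b τ u k H Hu Hk E Hbk (not_eq_sym n0)) as [_ [_ [_ D4]]].
  rewrite spin_flip. destruct (Nat.eq_dec (u mod n) (k mod n)); [lia|auto]. Qed.

Lemma rt_flip_other n A b τ k t x : SelOK n A b τ -> (k < n * n)%nat -> b k = 1 -> (t < n * n)%nat -> b t = 1 -> t <> k ->
  rt n A b t (flip (k mod n)%nat x) = rt n A b t x
    - 2 * (A (t / n)%nat (k mod n)%nat - A (t mod n)%nat (k mod n)%nat) * spin x (k mod n)%nat.
Proof. intros H Hk Hbk Ht Hbt Hne. unfold rt.
  transitivity (rsum (n * n) (fun u => (if Nat.eq_dec u t then 0 else
   b u * ((A (t / n)%nat (u mod n)%nat - A (t mod n)%nat (u mod n)%nat) * spin x (u mod n)%nat))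
   + delta u k * (- 2 * (A (t / n)%nat (k mod n)%nat - A (t mod n)%nat (k mod n)%nat) * spin x (k mod n)%nat))).
  - apply rsum_ext; intros u Hu. destruct H as [Hτ [Hs [Hn [Hd [H01 [Hc Hl]]]]]] eqn:HH. clear HH.
    unfold delta. destruct (Nat.eq_dec u t), (Nat.eq_dec u k); subst; try lia.
    + ring.
    + rewrite Hbk, spin_flip. destruct (Nat.eq_dec (k mod n) (k mod n)); [ring|lia].
    + destruct (H01 u) as [E|E]. rewrite E; ring.
      destruct (sel_disjoint n A b τ u k H Hu Hk E Hbk (not_eq_sym n1)) as [_ [_ [_ D4]]].
      rewrite spin_flip. destruct (Nat.eq_dec (u mod n) (k mod n)); [lia|ring].
  - rewrite rsum_plus, (rsum_delta _ (fun _ => _) k Hk). ring.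
Qed.

Lemma Dt_flip n A t x p : (p < n)%nat ->
  Dt n A t (flip p x) = Dt n A t x - 2 * (A (t / n)%nat p - A (t mod n)%nat p) * spin x p.
Proof. intros Hp. unfold Dt. rewrite lin_flip; auto. Qed.

Lemma Pt_flip_other n A b τ k t x : SelOK n A b τ -> (k < n * n)%nat -> b k = 1 -> (t < n * n)%nat -> b t = 1 -> t <> k ->
  Pt n A b t (flip (k mod n)%nat x) = Pt n A b t x.
Proof. intros H Hk Hbk Ht Hbt Hne. unfold Pt. rewrite (rt_flip_other n A b τ k t x); auto.
  destruct (divmod_lt n k Hk). rewrite Dt_flip; auto. ring. Qed.

Lemma Pt_flip_self n A b τ k x : SelOK n A b τ -> (k < n * n)%nat -> b k = 1 ->
  Pt n A b k (flip (k mod n)%nat x) = Pt n A b k x - 2 * A (k / n)%nat (k mod n)%nat * spin x (k mod n)%nat.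
Proof. intros H Hk Hbk. unfold Pt. rewrite (rt_flip_self n A b τ k x); auto.
  destruct (divmod_lt n k Hk). rewrite Dt_flip; auto.
  destruct H as [Hτ [Hs [Hn [Hd [H01 [Hc Hl]]]]]]. rewrite Hd; auto. ring. Qed.

Lemma gi_flip_self n A b τ k x : SelOK n A b τ -> (k < n * n)%nat -> b k = 1 -> In x (configs n) ->
  gi n A b τ k x = 0 -> gi n A b τ k (flip (k mod n)%nat x) = 1.
Proof. intros H Hk Hbk Hx Hg. unfold gi in *. rewrite (Pt_flip_self n A b τ k x H Hk Hbk).
  destruct (Rle_dec τ (Rabs (Pt n A b k x))) as [_|G]. lra.
  destruct (divmod_lt n k Hk). assert (Ha := proj1 (proj2 (proj2 (proj2 (proj2 (proj2 H))))) k Hk Hbk).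
  destruct (Rle_dec _ _) as [_|G2]; auto. exfalso. apply G2. apply Rnot_le_lt in G.
  set (P := Pt n A b k x) in *. set (a := A (k / n)%nat (k mod n)%nat) in *.
  destruct (configs_spin n x (k mod n)%nat Hx) as [E|E]; auto; rewrite E in *.
  - destruct (Rle_dec 0 P). rewrite Rabs_right in G by lra. rewrite Rabs_left by lra. lra.
    rewrite Rabs_left in G by lra. rewrite Rabs_left by lra. lra.
  - destruct (Rle_dec 0 P). rewrite Rabs_right in G by lra. rewrite Rabs_right by lra. lra.
    rewrite Rabs_left in G by lra. rewrite Rabs_right by lra. lra.
Qed.

Lemma gi01 n A b τ t x : gi n A b τ t x = 0 \/ gi n A b τ t x = 1.
Proof. unfold gi; destruct (Rle_dec _ _); auto. Qed.

Lemma Gc_flip n A b τ k x : SelOK n A b τ -> (k < n * n)%nat -> b k = 1 -> In x (configs n) ->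
  gi n A b τ k x = 0 -> Gc n A b τ (flip (k mod n)%nat x) = Gc n A b τ x + 1.
Proof. intros H Hk Hbk Hx Hg. unfold Gc.
  apply (rsum_step_lt _ _ _ k Hk).
  - rewrite Hg; ring.
  - rewrite Hbk, (gi_flip_self n A b τ k x); auto; ring.
  - intros u Hu Hne. destruct (proj1 (proj2 (proj2 (proj2 (proj2 H)))) u) as [E|E]; rewrite E. ring.
    unfold gi. rewrite (Pt_flip_other n A b τ k u x); auto.
Qed.

Lemma magn_abs n x : In x (configs n) -> Rabs (magn n x) <= INR n.
Proof. intros Hx. unfold magn. eapply Rle_trans. apply rsum_abs.
  rewrite <- (Rmult_1_r (INR n)), <- rsum_const. apply rsum_le; intros. apply (configs_spin_abs n x k Hx). Qed.

Lemma magn_flip n x p : (p < n)%nat -> magn n (flip p x) = magn n x - 2 * spin x p.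
Proof. intros Hp. unfold magn.
  transitivity (rsum n (fun q => 1 * spin (flip p x) q)). apply rsum_ext; intros; ring.
  rewrite lin_flip; auto. replace (rsum n (fun q => 1 * spin x q)) with (rsum n (spin x)). ring.
  apply rsum_ext; intros; ring. Qed.

Lemma weight_flip n β B x p : (1 <= n)%nat -> 0 <= β -> In x (configs n) -> (p < n)%nat ->
  cw_weight n β B x <= exp (2 * β + 2 * Rabs B) * cw_weight n β B (flip p x).
Proof. intros Hn Hb Hx Hp. unfold cw_weight. rewrite <- exp_plus.
  assert (Hexp : forall a c, a <= c -> exp a <= exp c).
  { intros a c Hac. destruct (Rle_lt_or_eq_dec a c Hac). left; apply exp_increasing; auto. subst; lra. }
  apply Hexp. rewrite magn_flip; auto.
  set (M := magn n x). set (s := spin x p).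
  assert (Hs : s * s = 1). { destruct (configs_spin n x p Hx Hp) as [E|E]; unfold s; rewrite E; ring. }
  assert (HM : Rabs M <= INR n) by (apply magn_abs; auto).
  assert (HnR : 1 <= INR n) by (apply (le_INR 1); auto).
  assert (HsM : s * M <= INR n).
  { assert (Rabs (s * M) <= INR n). rewrite Rabs_mult. replace (Rabs s) with 1. lra.
    destruct (configs_spin n x p Hx Hp) as [E|E]; unfold s; rewrite E; [rewrite Rabs_R1|rewrite Rabs_left by lra]; lra.
    apply Rle_trans with (Rabs (s * M)); [apply Rle_abs|lra]. }
  assert (HBs : B * s <= Rabs B).
  { destruct (configs_spin n x p Hx Hp) as [E|E]; unfold s; rewrite E.
    rewrite Rmult_1_r; apply Rle_abs. replace (B * -1) with (- B) by ring. rewrite <- Rabs_Ropp. apply Rle_abs. }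
  replace (β / (2 * INR n) * M ^ 2 + B * M) with
    (β / (2 * INR n) * (M - 2 * s) ^ 2 + B * (M - 2 * s) + (β / (2 * INR n) * (4 * (s * M) - 4 * (s * s)) + 2 * (B * s)))
    by ring.
  assert (β / (2 * INR n) * (4 * (s * M) - 4 * (s * s)) <= 2 * β).
  { rewrite Hs. apply Rle_trans with (β / (2 * INR n) * (4 * INR n)).
    apply Rmult_le_compat_l. unfold Rdiv. apply Rmult_le_pos; auto. left; apply Rinv_0_lt_compat; lra. lra.
    right. field. lra. }
  lra.
Qed.

Definition ind (G : R) (k : R) : R := if Rle_dec G k then 1 else 0.
Definition Hk n A b τ β B (k : R) : R :=
  lsum (configs n) (fun x => ind (Gc n A b τ x) k * cw_weight n β B x).

Lemma w_pos n β B x : 0 < cw_weight n β B x. Proof. apply exp_pos. Qed.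

Lemma Hk_nonneg n A b τ β B k : 0 <= Hk n A b τ β B k.
Proof. apply lsum_nonneg; intros. unfold ind. destruct (Rle_dec _ _); [|lra].
  rewrite Rmult_1_l; left; apply w_pos. Qed.

Lemma Gc_b n A b τ x : SelOK n A b τ -> rsum (n * n) b - Gc n A b τ x = rsum (n * n) (fun u => b u * (1 - gi n A b τ u x)).
Proof. intros H. unfold Gc. rewrite <- rsum_minus. apply rsum_ext; intros; ring. Qed.

Lemma recur n A b τ β B k : SelOK n A b τ -> (1 <= n)%nat -> 0 <= β ->
  Hk n A b τ β B k * (rsum (n * n) b - k) <= exp (2 * β + 2 * Rabs B) * (k + 1) * Hk n A b τ β B (k + 1).
Proof. intros H Hn Hb. set (K := exp (2 * β + 2 * Rabs B)).
  set (G := Gc n A b τ). set (w := cw_weight n β B).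
  assert (HK : 0 < K) by apply exp_pos.
  apply Rle_trans with (lsum (configs n) (fun x => ind (G x) k * w x * rsum (n * n) (fun u => b u * (1 - gi n A b τ u x)))).
  { unfold Hk. rewrite Rmult_comm, <- lsum_scal. apply lsum_le. intros x Hx. fold G w.
    rewrite <- Gc_b by auto. fold G. unfold ind. destruct (Rle_dec (G x) k). 2: lra.
    assert (0 < w x) by apply w_pos. nra. }
  apply Rle_trans with (lsum (configs n) (fun x => rsum (n * n) (fun u => b u * (ind (G x) k * w x * (1 - gi n A b τ u x))))).
  { right. apply lsum_ext; intros x _. rewrite <- rsum_scal. apply rsum_ext; intros; ring. }
  rewrite lsum_rsum_swap.
  apply Rle_trans with (rsum (n * n) (fun u => b u * lsum (configs n) (fun y => K * (ind (G y) (k + 1) * w y * gi n A b τ u y)))).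
  { apply rsum_le. intros u Hu. assert (H' := H). destruct H' as [Hτ [Hs [Hnn [Hd [H01 [Hc Hl]]]]]].
    destruct (H01 u) as [E|E]; rewrite E.
    - rewrite lsum_ext with (g := fun _ => 0). 2:{ intros; ring. } unfold lsum. rewrite Rmult_0_l.
      clear. induction (configs n); simpl; lra.
    - rewrite Rmult_1_l. rewrite <- (lsum_configs_flip n (u mod n)%nat (fun y => K * (ind (G y) (k + 1) * w y * gi n A b τ u y))).
      apply lsum_le. intros x Hx. rewrite Rmult_1_l.
      destruct (divmod_lt n u Hu).
      destruct (gi01 n A b τ u x) as [Eg|Eg].
      + rewrite Eg. unfold ind. destruct (Rle_dec (G x) k).
        * assert (Gf := Gc_flip n A b τ u x H Hu E Hx Eg). fold G in Gf. rewrite Gf.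
          destruct (Rle_dec (G x + 1) (k + 1)); [|lra].
          rewrite (gi_flip_self n A b τ u x H Hu E Hx Eg).
          assert (Hw := weight_flip n β B x (u mod n)%nat Hn Hb Hx H1). fold w K in Hw. lra.
        * rewrite Rmult_0_l, Rmult_0_l. apply Rmult_le_pos; [lra|].
          destruct (Rle_dec _ _); destruct (gi01 n A b τ u (flip (u mod n)%nat x)) as [E2|E2]; rewrite E2;
          assert (0 < w (flip (u mod n)%nat x)) by apply w_pos; nra.
      + rewrite Eg, Rminus_diag, Rmult_0_r. apply Rmult_le_pos; [lra|].
        unfold ind; destruct (Rle_dec _ _); destruct (gi01 n A b τ u (flip (u mod n)%nat x)) as [E2|E2]; rewrite E2;
        assert (0 < w (flip (u mod n)%nat x)) by apply w_pos; nra. }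
  apply Rle_trans with (K * lsum (configs n) (fun y => ind (G y) (k + 1) * w y * G y)).
  { right. rewrite <- lsum_scal.
    transitivity (rsum (n * n) (fun u => lsum (configs n) (fun y => K * (ind (G y) (k + 1) * w y) * (b u * gi n A b τ u y)))).
    apply rsum_ext; intros. rewrite <- lsum_scal. apply lsum_ext; intros; ring.
    rewrite <- lsum_rsum_swap. apply lsum_ext; intros y _. rewrite rsum_scal. unfold G, Gc. ring. }
  rewrite Rmult_assoc. apply Rmult_le_compat_l; [lra|]. unfold Hk. rewrite <- lsum_scal. apply lsum_le.
  intros y Hy. fold G w. unfold ind. destruct (Rle_dec (G y) (k + 1)). 2: lra.
  assert (0 < w y) by apply w_pos. nra.
Qed.

Lemma half_step n A b τ β B k : SelOK n A b τ -> (1 <= n)%nat -> 0 <= β -> 0 <= k ->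
  (k + 1) * (2 * exp (2 * β + 2 * Rabs B) + 1) <= rsum (n * n) b ->
  Hk n A b τ β B k <= / 2 * Hk n A b τ β B (k + 1).
Proof. intros H Hn Hb Hk0 HL. assert (R := recur n A b τ β B k H Hn Hb).
  set (K := exp (2 * β + 2 * Rabs B)) in *. assert (0 < K) by apply exp_pos.
  set (h0 := Hk n A b τ β B k) in *. set (h1 := Hk n A b τ β B (k + 1)) in *.
  assert (0 <= h0) by apply Hk_nonneg. assert (0 <= h1) by apply Hk_nonneg.
  set (L := rsum (n * n) b) in *.
  assert (h0 * (2 * K * (k + 1)) <= K * (k + 1) * h1).
  { eapply Rle_trans; [|exact R]. apply Rmult_le_compat_l; auto. nra. }
  assert (0 < K * (k + 1)) by nra. nra. Qed.

Lemma chain n A b τ β B d : SelOK n A b τ -> (1 <= n)%nat -> 0 <= β -> forall k, 0 <= k ->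
  (k + INR d) * (2 * exp (2 * β + 2 * Rabs B) + 1) <= rsum (n * n) b ->
  Hk n A b τ β B k <= (/ 2) ^ d * Hk n A b τ β B (k + INR d).
Proof. intros H Hn Hb. induction d; intros k Hk0 HL.
  - simpl. rewrite Rplus_0_r. lra.
  - assert (0 < exp (2 * β + 2 * Rabs B)) by apply exp_pos. rewrite S_INR in HL.
    assert (E1 := half_step n A b τ β B k H Hn Hb Hk0).
    assert (HL1 : (k + 1) * (2 * exp (2 * β + 2 * Rabs B) + 1) <= rsum (n * n) b).
    { eapply Rle_trans; [|exact HL]. apply Rmult_le_compat_r. lra. assert (0 <= INR d) by apply pos_INR. lra. }
    specialize (E1 HL1).
    assert (E2 := IHd (k + 1) ltac:(lra) ltac:(replace (k + 1 + INR d) with (k + (INR d + 1)) by ring; auto)).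
    rewrite S_INR. replace (k + (INR d + 1)) with (k + 1 + INR d) by ring. simpl.
    assert (0 <= / 2) by lra. nra. Qed.

Lemma Hk_le_Z n A b τ β B k : Hk n A b τ β B k <= lsum (configs n) (cw_weight n β B).
Proof. unfold Hk. apply lsum_le; intros x _. unfold ind. destruct (Rle_dec _ _).
  lra. rewrite Rmult_0_l. left; apply w_pos. Qed.

Lemma half_pow_exp d : (/ 2) ^ d = exp (- (INR d * ln 2)).
Proof. induction d. simpl. rewrite Rmult_0_l, Ropp_0, exp_0. reflexivity.
  rewrite S_INR. simpl. rewrite IHd.
  replace (- ((INR d + 1) * ln 2)) with (- ln 2 + - (INR d * ln 2)) by ring.
  rewrite exp_plus, (exp_Ropp (ln 2)), exp_ln by lra. reflexivity. Qed.

Lemma count_cand n A γ τ c : 0 < τ -> 0 < γ ->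
  (forall i j, (i < n)%nat -> (j < n)%nat -> 0 <= A i j) ->
  (forall i, (i < n)%nat -> rsum n (fun j => A i j) <= γ) ->
  c * INR n <= rsum n (fun i => rsum n (fun j => (A i j) ^ 2)) ->
  c * INR n - τ * γ * INR n <= γ * γ * rsum (n * n) (fun t => if Rle_dec τ (A (t / n)%nat (t mod n)%nat) then 1 else 0).
Proof. intros Hτ Hγ Hn Hr Hc.
  rewrite <- rsum_scal, (rsum_pair n (fun i j => γ * γ * (if Rle_dec τ (A i j) then 1 else 0))).
  assert (rsum n (fun i => rsum n (fun j => (A i j) ^ 2)) <=
    rsum n (fun i => rsum n (fun j => γ * γ * (if Rle_dec τ (A i j) then 1 else 0))) + rsum n (fun i => τ * rsum n (fun j => A i j))).
  { rewrite <- rsum_plus. apply rsum_le; intros i Hi. rewrite <- rsum_scal, <- rsum_plus. apply rsum_le; intros j Hj.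
    assert (0 <= A i j) by auto. assert (A i j <= γ).
    { eapply Rle_trans; [|apply (Hr i Hi)]. apply (rsum_term_le n (fun j => A i j) j); auto. }
    destruct (Rle_dec τ (A i j)). nra. nra. }
  assert (rsum n (fun i => τ * rsum n (fun j => A i j)) <= τ * γ * INR n).
  { rewrite rsum_scal. rewrite Rmult_assoc. apply Rmult_le_compat_l. lra.
    rewrite Rmult_comm, <- rsum_const. apply rsum_le; auto. }
  lra. Qed.

Theorem lemma4 (A : nat -> nat -> nat -> R) (beta : nat -> R)
  (Hbeta : exists b1 b2 : R, 0 < b1 /\
             forall n : nat, (1 <= n)%nat -> b1 <= beta n <= b2)
  (Hsym : forall n i j, (i < n)%nat -> (j < n)%nat -> A n i j = A n j i)
  (Hnonneg : forall n i j, (i < n)%nat -> (j < n)%nat -> 0 <= A n i j)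
  (Hdiag : forall n i, (i < n)%nat -> A n i i = 0)
  (HC1 : exists gamma : R, forall n i, (i < n)%nat ->
           rsum n (fun j => A n i j) <= gamma)
  (Hliminf : exists c : R, 0 < c /\ exists N : nat, forall n : nat, (N <= n)%nat ->
           c <= / INR n * rsum n (fun i => rsum n (fun j => (A n i j) ^ 2)))
  : forall B : R, exists delta : R, 0 < delta /\
      exists eps : R, 0 < eps /\ exists N : nat, forall n : nat, (N <= n)%nat ->
        cw_prob n (beta n) B (fun x => m_var n (A n) x <= INR n * delta)
          (fun x => Rle_dec (m_var n (A n) x) (INR n * delta))
        <= exp (- eps * INR n).
Proof.
  intros B.
  destruct Hbeta as [b1 [b2 [Hb1 Hbeta']]].
  destruct HC1 as [g0 Hg0].
  destruct Hliminf as [c [Hc [N0 HN0]]].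
  set (γ := Rmax g0 1).
  assert (Hγ : 0 < γ) by (unfold γ; apply Rlt_le_trans with 1; [lra| apply Rmax_r]).
  assert (Hrow : forall n i, (i < n)%nat -> rsum n (fun j => A n i j) <= γ)
    by (intros; eapply Rle_trans; [apply Hg0; auto| apply Rmax_l]).
  set (τ := c / (2 * γ)).
  assert (Hτ : 0 < τ) by (unfold τ; apply Rdiv_lt_0_compat; lra).
  assert (Hτγ : τ * γ = c / 2) by (unfold τ; field; lra).
  set (λ1 := 1 + 16 * (γ * γ) / (τ * τ)).
  assert (Hλ : 1 <= λ1).
  { unfold λ1. assert (0 <= 16 * (γ * γ) / (τ * τ)). unfold Rdiv. apply Rmult_le_pos. nra.
    left; apply Rinv_0_lt_compat; nra. lra. }
  set (α := c / (2 * (γ * γ) * λ1)).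
  assert (Hα : 0 < α) by (unfold α; apply Rdiv_lt_0_compat; [lra|]; apply Rmult_lt_0_compat; nra).
  set (E := exp (2 * b2 + 2 * Rabs B)).
  assert (HE : 0 < E) by apply exp_pos.
  set (ρ := α / (2 * (2 * E + 1))).
  assert (Hρ : 0 < ρ) by (unfold ρ; apply Rdiv_lt_0_compat; lra).
  destruct (INR_archimed 1 (2 / ρ) ltac:(lra)) as [Q HQ]. rewrite Rmult_1_r in HQ.
  assert (HQpos : 0 < INR Q). { assert (0 < 2 / ρ) by (apply Rdiv_lt_0_compat; lra). lra. }
  assert (HQnz : Q <> 0%nat). { intro; subst; simpl in HQpos; lra. }
  assert (HQρ : / INR Q < ρ / 2).
  { apply (Rmult_lt_reg_l (INR Q)); auto. rewrite Rinv_r by lra.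
    apply (Rmult_lt_reg_l (2 / ρ)). apply Rdiv_lt_0_compat; lra.
    replace (2 / ρ * (INR Q * (ρ / 2))) with (INR Q) by (field; lra). lra. }
  assert (Hln2 : 0 < ln 2) by (rewrite <- ln_1; apply ln_increasing; lra).
  set (κ := 9 * (τ * τ) / 32).
  assert (Hκ : 0 < κ) by (unfold κ; nra).
  exists (κ * ρ / 2). split. nra.
  exists (ln 2 / (2 * INR Q)). split. apply Rdiv_lt_0_compat; lra.
  exists (Nat.max N0 (Nat.max 1 (2 * Q))). intros n Hn.
  assert (Hn1 : (1 <= n)%nat) by lia. assert (Hn0 : (N0 <= n)%nat) by lia. assert (HnQ : (2 * Q <= n)%nat) by lia.
  assert (HnR : 1 <= INR n) by (apply (le_INR 1); auto).
  set (β := beta n). assert (Hβ : b1 <= β <= b2) by (apply Hbeta'; auto).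
  assert (Hβ0 : 0 <= β) by lra.
  destruct (selection n (A n) γ τ Hτ (Hsym n) (Hnonneg n) (Hrow n)) as [b [H01 [Hcb [Hl Hcount]]]].
  assert (HS : SelOK n (A n) b τ) by (repeat split; auto).
  fold λ1 in Hcount.
  assert (HL : α * INR n <= rsum (n * n) b).
  { assert (Hsq : c * INR n <= rsum n (fun i => rsum n (fun j => (A n i j) ^ 2))).
    { specialize (HN0 n Hn0). apply (Rmult_le_compat_l (INR n)) in HN0; [|lra].
      rewrite <- Rmult_assoc, Rinv_r, Rmult_1_l in HN0 by lra. lra. }
    assert (Hcc := count_cand n (A n) γ τ c Hτ Hγ (Hnonneg n) (Hrow n) Hsq).
    rewrite Hτγ in Hcc.
    set (m := rsum (n * n) _) in Hcc, Hcount. set (L := rsum (n * n) b) in *.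
    assert (c * INR n / 2 <= γ * γ * (λ1 * L)).
    { eapply Rle_trans; [|apply Rmult_le_compat_l; [nra|exact Hcount]]. lra. }
    unfold α. apply (Rmult_le_reg_l (2 * (γ * γ) * λ1)). nra.
    replace (2 * (γ * γ) * λ1 * (c / (2 * (γ * γ) * λ1) * INR n)) with (c * INR n) by (field; nra).
    nra. }
  set (Z := lsum (configs n) (cw_weight n β B)).
  assert (HZ : 0 < Z).
  { destruct (configs_nonempty n) as [x0 Hx0]. apply (lsum_pos _ _ x0 Hx0).
    intros; left; apply w_pos. apply w_pos. }
  set (k0 := ρ * INR n / 2).
  set (d := (n / Q)%nat).
  assert (Hdiv : INR n = INR Q * INR d + INR (n mod Q)).
  { rewrite <- mult_INR, <- plus_INR. f_equal. apply Nat.div_mod; auto. }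
  assert (Hmod : INR (n mod Q) < INR Q) by (apply lt_INR, Nat.mod_upper_bound; auto).
  assert (Hmod0 : 0 <= INR (n mod Q)) by apply pos_INR.
  assert (Hd0 : 0 <= INR d) by apply pos_INR.
  assert (HdU : INR d <= INR n * / INR Q).
  { apply (Rmult_le_reg_l (INR Q)); auto. rewrite (Rmult_comm (INR n)), <- Rmult_assoc, Rinv_r, Rmult_1_l by lra. lra. }
  assert (HdL : INR n * / (2 * INR Q) <= INR d).
  { assert (HnQR : 2 * INR Q <= INR n). { replace (2 * INR Q) with (INR (2 * Q)) by (rewrite mult_INR; simpl; ring). apply le_INR; auto. }
    apply (Rmult_le_reg_l (2 * INR Q)). lra.
    rewrite (Rmult_comm (INR n)), <- Rmult_assoc, Rinv_r, Rmult_1_l by lra. nra. }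
  assert (Hnum : fold_right Rplus 0 (map (fun x => if Rle_dec (m_var n (A n) x) (INR n * (κ * ρ / 2))
        then cw_weight n β B x else 0) (configs n)) <= Hk n (A n) b τ β B k0).
  { apply lsum_le. intros x Hx. unfold ind. destruct (Rle_dec _ _) as [Hv|Hv].
    - assert (Hvb := Vbound n (A n) b τ x HS Hx). fold κ in Hvb.
      destruct (Rle_dec (Gc n (A n) b τ x) k0) as [_|Hg]. lra. exfalso. apply Hg.
      unfold k0. apply (Rmult_le_reg_l κ); auto. nra.
    - destruct (Rle_dec _ _); [rewrite Rmult_1_l|rewrite Rmult_0_l]; [left; apply w_pos | lra]. }
  assert (Hk0 : 0 <= k0) by (unfold k0; nra).
  assert (Hch := chain n (A n) b τ β B d HS Hn1 Hβ0 k0 Hk0).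
  assert (HK : exp (2 * β + 2 * Rabs B) <= E).
  { unfold E. destruct (Req_dec_T β b2). subst β. rewrite e. lra. left; apply exp_increasing; lra. }
  assert (Hcond : (k0 + INR d) * (2 * exp (2 * β + 2 * Rabs B) + 1) <= rsum (n * n) b).
  { apply Rle_trans with ((ρ * INR n) * (2 * E + 1)).
    - apply Rmult_le_compat. lra. assert (0 < exp (2 * β + 2 * Rabs B)) by apply exp_pos. lra.
      unfold k0. assert (INR n * / INR Q <= INR n * (ρ / 2)). apply Rmult_le_compat_l; lra. lra. lra.
    - unfold ρ. replace (α / (2 * (2 * E + 1)) * INR n * (2 * E + 1)) with (α * INR n / 2) by (field; lra).
      assert (0 < α * INR n) by nra. lra. }
  specialize (Hch Hcond).
  assert (Hfin : (/ 2) ^ d <= exp (- (ln 2 / (2 * INR Q)) * INR n)).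
  { rewrite half_pow_exp. destruct (Rle_lt_or_eq_dec _ _ (Rle_refl 0)); [lra|].
    assert (Hle : - (INR d * ln 2) <= - (ln 2 / (2 * INR Q)) * INR n).
    { replace (- (ln 2 / (2 * INR Q)) * INR n) with (- (INR n * / (2 * INR Q) * ln 2)) by (field; lra).
      apply Ropp_le_contravar. apply Rmult_le_compat_r; lra. }
    destruct (Rle_lt_or_eq_dec _ _ Hle) as [Hlt|Heq]. left; apply exp_increasing; auto. rewrite Heq; lra. }
  unfold cw_prob. fold β.
  change (fold_right Rplus 0 (map (cw_weight n β B) (configs n))) with Z.
  apply (Rmult_le_reg_r Z); auto. unfold Rdiv. rewrite Rmult_assoc, Rinv_l, Rmult_1_r by lra.
  eapply Rle_trans; [exact Hnum|]. eapply Rle_trans; [exact Hch|].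
  apply Rmult_le_compat. apply pow_le; lra. apply Hk_nonneg. exact Hfin. apply Hk_le_Z.
Qed.
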